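(* Let $G=(V,E)$ be a graph and let $f_0,f_t\colon V\to\{1,2\}$ be token-placements with $f_0\simeq f_t$. Let $G_B$ be the complete bipartite graph with parts $X=\{x_v : v\in V,\ f_0(v)=1\}$ and $Y=\{y_v: v\in V,\ f_t(v)=1\}$, where the edge $(x_u,y_v)$ has weight $w(x_u,y_v)=\mathrm{dist}_G(u,v)$, the length of a shortest $u$–$v$ path in $G$ ($\infty$ if none). Then $\mathrm{OPT}(f_0,f_t)=\min_M \sum_{e\in M}w(e)$, where the minimum is over all perfect matchings $M$ of $G_B$.
   Context: Graphs are finite, simple and undirected. A token-placement of $G=(V,E)$ with colors $C=\{1,\dots,c\}$ is a surjective map $f\colon V\to C$. Two distinct token-placements $f,f'$ are adjacent if there is an edge $uv\in E$ with $f'(u)=f(v)$, $f'(v)=f(u)$ and $f'(w)=f(w)$ for all other $w$. A swapping sequence between $f$ and $f'$ is a sequence $f_1=f,\dots,f_h=f'$ of token-placements with consecutive members adjacent; its length is $h-1$. $\mathrm{OPT}(f,f')$ is the minimum length of such a sequence ($\infty$ if none). $f\simeq f'$ means that for every connected component $K$ of $G$ and every color $i$, the numbers of vertices of $K$ with $f$-color $i$ and with $f'$-color $i$ coincide. *)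

(* Defs.v *)
From mathcomp Require Import all_boot.
Set Implicit Arguments. Unset Strict Implicit. Unset Printing Implicit Defensive.

(* Extended naturals: option nat, None = infinity.
   [is_einf P o] : o is the minimum of the set {k | P k} in N u {oo}
   (o = None iff the set is empty). *)
Definition is_einf (P : nat -> Prop) (o : option nat) : Prop :=
  match o with
  | Some k => P k /\ (forall j, P j -> k <= j)
  | None => forall j, ~ P j
  end.

Definition token_placement (T : finType) (c : nat) (f : T -> nat) : Prop :=
  (forall v, 1 <= f v <= c) /\ (forall i, 1 <= i <= c -> exists v, f v = i).

Definition tp_adj (T : finType) (e : rel T) (f f' : T -> nat) : Prop :=
  (exists w, f w <> f' w) /\
  exists u v, e u v /\ f' u = f v /\ f' v = f u /\
    (forall w, w <> u -> w <> v -> f' w = f w).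

(* swapping sequence f_1 = f, ..., f_h = f' of length h-1 = k *)
Definition swap_seq (T : finType) (c : nat) (e : rel T) (f f' : T -> nat) (k : nat) : Prop :=
  exists s : seq (T -> nat),
    [/\ size s = k.+1, nth f s 0 = f, nth f s k = f',
        (forall i, i <= k -> token_placement c (nth f s i)) &
        (forall i, i < k -> tp_adj e (nth f s i) (nth f s i.+1))].

Definition OPT_is (T : finType) (c : nat) (e : rel T) (f f' : T -> nat) (o : option nat) :=
  is_einf (swap_seq c e f f') o.

Definition walk (T : finType) (e : rel T) (u v : T) (k : nat) : Prop :=
  exists p : seq T, [/\ size p = k, path e u p & last u p = v].

Definition dist_is (T : finType) (e : rel T) (u v : T) (o : option nat) :=
  is_einf (walk e u v) o.

(* f ~= f' : for every connected component K (the class of some v) and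
   every color i, same number of vertices of K colored i. *)
Definition tp_equiv (T : finType) (e : rel T) (f f' : T -> nat) : Prop :=
  forall (v : T) (i : nat),
    #|[set w | connect e v w & f w == i]| = #|[set w | connect e v w & f' w == i]|.

(* Perfect matching of the complete bipartite graph G_B with parts
   X = {x_u | f0 u = 1}, Y = {y_v | ft v = 1}: a bijection M from X onto Y;
   the matching is {(x_u, y_(M u)) | u in X}. *)
Definition perfect_matching (T : finType) (f0 ft : T -> nat) (M : T -> T) : Prop :=
  [/\ (forall u, f0 u = 1 -> ft (M u) = 1),
      (forall u u', f0 u = 1 -> f0 u' = 1 -> M u = M u' -> u = u') &
      (forall v, ft v = 1 -> exists u, f0 u = 1 /\ M u = v)].

Definition matching_weight_fin (T : finType) (e : rel T) (f0 : T -> nat) (M : T -> T) (k : nat) :=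
  exists d : T -> nat,
    (forall u, f0 u = 1 -> dist_is e u (M u) (Some (d u))) /\
    k = \sum_(u : T | f0 u == 1) d u.

Definition min_matching_is (T : finType) (e : rel T) (f0 ft : T -> nat) (o : option nat) :=
  is_einf (fun k => exists M, perfect_matching f0 ft M /\ matching_weight_fin e f0 M k) o.

(* Main.v *)
Require Import Defs.
From mathcomp Require Import all_boot zify.
From Stdlib Require Import Classical FunctionalExtensionality IndefiniteDescription.
Set Implicit Arguments. Unset Strict Implicit. Unset Printing Implicit Defensive.

Lemma einf_exists (P : nat -> Prop) n : P n -> exists m, P m /\ forall j, P j -> m <= j.
Proof.
elim: n {-2}n (leqnn n) => [|n IH] m Hm Pm.
- exists m; split => // j _; lia.
- destruct (classic (exists j, j < m /\ P j)) as [[j [Hj Pj]]|H].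
  + apply: (IH j) => //; lia.
  + exists m; split => // j Pj; rewrite leqNgt; apply/negP => Hj; apply: H; by exists j.
Qed.

Lemma einf_imp (P Q : nat -> Prop) :
  (forall k, P k -> exists2 k', k' <= k & Q k') ->
  (forall k, Q k -> exists2 k', k' <= k & P k') ->
  forall o, is_einf P o -> is_einf Q o.
Proof.
move=> PQ QP [k|] /=.
- move=> [Pk Hmin]. have [k' lek' Qk'] := PQ k Pk. have [k'' lek'' Pk''] := QP k' Qk'.
  have h := Hmin _ Pk''. have ek : k' = k by lia. split; first by rewrite -ek.
  move=> j Qj; have [j' lej' Pj'] := QP j Qj. have := Hmin _ Pj'. lia.
- move=> HP j Qj. have [j' _ Pj'] := QP j Qj. exact: HP _ Pj'.
Qed.

Lemma fchoice (T : Type) (R : T -> nat -> Prop) :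
  (forall u, exists m, R u m) -> exists g, forall u, R u (g u).
Proof.
move=> H. exists (fun u => proj1_sig (constructive_indefinite_description _ (H u))).
move=> u. exact: proj2_sig.
Qed.

Lemma walk0 (T : finType) (e : rel T) u : walk e u u 0.
Proof. by exists [::]. Qed.

Lemma walk_cat (T : finType) (e : rel T) a b c m n :
  walk e a b m -> walk e b c n -> walk e a c (m + n).
Proof.
move=> [p [sp pp lp]] [q [sq pq lq]]; exists (p ++ q).
by rewrite size_cat sp sq cat_path last_cat lp pp pq lq.
Qed.

Lemma walk_cons (T : finType) (e : rel T) a b c n :
  e a b -> walk e b c n -> walk e a c n.+1.
Proof. move=> eab [p [sp pp lp]]; exists (b :: p); by rewrite /= sp eab pp lp. Qed.

Lemma walk_split (T : finType) (e : rel T) (f : T -> nat) a b n :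
  walk e a b n -> f a = 1 -> f b <> 1 ->
  exists x y i j, [/\ walk e a x i, e x y, walk e y b j, i + j.+1 = n & f x = 1 /\ f y <> 1].
Proof.
move=> [p [sp pp lp]]; elim: p a n sp pp lp => [|c p IH] a n sp pp lp fa fb.
- by move: lp fb => /= <-; rewrite fa.
- move: pp => /= /andP [eac pp]. case: (eqVneq (f c) 1) => fc.
  + have [x [y [i [j [w1 exy w2 hn [fx fy]]]]]] := IH c (size p) erefl pp lp fc fb.
    exists x, y, i.+1, j; split => //; first exact: walk_cons eac w1.
    rewrite -sp /=; lia.
  + exists a, c, 0, (size p); split => //; first exact: walk0.
    all: try by exists p.
    all: try by rewrite -sp.
    split => //; by apply/eqP.
Qed.

Lemma swap_pred (T : finType) (f f1 : T -> nat) x y :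
  f1 x = f y -> f1 y = f x -> (forall w, w <> x -> w <> y -> f1 w = f w) ->
  f x = 1 -> f y <> 1 ->
  forall z, ((f1 z == 1) && (z != y)) = ((f z == 1) && (z != x)).
Proof.
move=> h1 h2 h3 fx fy z.
have fyb : (f y == 1) = false by apply/eqP.
case: (eqVneq z x) => [->|zx]; first by rewrite h1 fyb andbF.
case: (eqVneq z y) => [->|zy]; first by rewrite fyb andbF.
rewrite h3 //; by apply/eqP.
Qed.

Lemma lemA (T : finType) (e : rel T) (e_sym : symmetric e) (ft : T -> nat) :
  forall k f, swap_seq 2 e f ft k ->
  exists M d, [/\ perfect_matching f ft M, (forall u, f u = 1 -> walk e u (M u) (d u)) &
     \sum_(u | f u == 1) d u <= k].
Proof.
elim => [|k IH] f [s [ss s0 sk stp sadj]].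
- rewrite s0 in sk; subst ft.
  exists id, (fun _ => 0); split.
  + split.
    * by [].
    * by move=> u u' _ _.
    * by move=> v hv; exists v.
  + move=> u _; exact: walk0.
  + by rewrite big1.
- case: s ss s0 sk stp sadj => [|a s'] //= [ss] s0 sk stp sadj.
  set f1 := nth f s' 0.
  have sw : swap_seq 2 e f1 ft k.
  { have D : forall i, i < k.+1 -> nth f1 s' i = nth f s' i.
    { move=> i hi; apply: set_nth_default; by rewrite ss. }
    exists s'; split => //.
    - by rewrite D.
    - by rewrite D.
    - move=> i hi; rewrite D; last by lia.
      exact: (stp i.+1).
    - move=> i hi; rewrite !D; try lia.
      exact: (sadj i.+1). }
  have [M1 [d1 [[pm1 pm2 pm3] hw1 hs1]]] := IH f1 sw.
  have [rf _] := stp 0 erefl. rewrite /= s0 in rf.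
  have := sadj 0 erefl. rewrite /= s0 -/f1. move=> -[[w hw] [u [v [euv [h1 [h2 h3]]]]]].
  have : exists x y, [/\ e x y, f1 x = f y, f1 y = f x,
                 (forall w, w <> x -> w <> y -> f1 w = f w) & f x = 1 /\ f y <> 1].
  { have fuv : f u <> f v.
    { move=> fuv; apply: hw.
      case: (eqVneq w u) => [->|wu]; first by rewrite h1 fuv.
      case: (eqVneq w v) => [->|wv]; first by rewrite h2 fuv.
      by rewrite h3 //; apply/eqP. }
    have := rf u; have := rf v => ru rv.
    case: (eqVneq (f u) 1) => fu.
    - exists u, v; split => //; split => //; lia.
    - exists v, u; split => //; first by rewrite e_sym.
      + by move=> w' a1 b1; apply: h3.
      + split; lia. }
  move=> [x [y [exy h1x h1y h3' [fx fy]]]].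
  have f1y : f1 y = 1 by rewrite h1y.
  have f1z : forall z, f z = 1 -> z != x -> f1 z = 1.
  { move=> z fz zx; rewrite h3' //; first by apply/eqP.
    by move=> zy; apply: fy; rewrite -zy. }
  pose M := fun z => if z == x then M1 y else M1 z.
  pose d := fun z => if z == x then (d1 y).+1 else d1 z.
  exists M, d; split.
  + split.
    * move=> z fz; rewrite /M; case: eqP => [_|/eqP zx]; first exact: pm1.
      exact/pm1/f1z.
    * move=> z z' fz fz'; rewrite /M.
      case: (eqVneq z x) => [->|zx]; case: (eqVneq z' x) => [->|z'x] // h.
      -- have := pm2 _ _ f1y (f1z _ fz' z'x) h => yz'. by move: fy; rewrite yz' fz'.
      -- have := pm2 _ _ (f1z _ fz zx) f1y h => yz. by move: fy; rewrite -yz fz.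
      -- exact: pm2 _ _ (f1z _ fz zx) (f1z _ fz' z'x) h.
    * move=> v' hv'. have [w' [fw' Mw']] := pm3 v' hv'.
      case: (eqVneq w' y) => [wy|wy].
      -- exists x; split => //; by rewrite /M eqxx -Mw' wy.
      -- have wx : w' != x.
         { apply/eqP => wx; move: fw'; rewrite wx h1x; exact: fy. }
         exists w'; split; last by rewrite /M (negbTE wx).
         rewrite -h3' //; by apply/eqP.
  + move=> z fz; rewrite /M /d; case: eqP => [->|/eqP zx].
    * exact: walk_cons exy (hw1 _ f1y).
    * exact: hw1 _ (f1z _ fz zx).
  + rewrite (bigD1 x) /=; last by apply/eqP.
    have E : \sum_(z | (f z == 1) && (z != x)) d z = \sum_(z | (f1 z == 1) && (z != y)) d1 z.
    { apply: eq_big => [z|z /andP [_ zx]]; first by rewrite (swap_pred h1x h1y h3' fx fy).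
      by rewrite /d (negbTE zx). }
    move: hs1; rewrite E (bigD1 y) /=; last by apply/eqP.
    rewrite /d eqxx. lia.
Qed.

Lemma noV (T : finType) (f ft : T -> nat) M :
  (forall v, 1 <= f v <= 2) -> (forall v, 1 <= ft v <= 2) ->
  (forall u, f u = 1 -> ft (M u) = 1) ->
  (forall u u', f u = 1 -> f u' = 1 -> M u = M u' -> u = u') ->
  (forall v, ft v = 1 -> f v = 1) -> f = ft.
Proof.
move=> rf rft h1 h2 h3.
pose SX := [set z | f z == 1]; pose SY := [set z | ft z == 1].
have sYX : SY \subset SX.
{ apply/subsetP => z; rewrite !inE => /eqP /h3 ->; by []. }
have sMY : M @: SX \subset SY.
{ apply/subsetP => z /imsetP [w]; rewrite inE => /eqP fw ->; by rewrite inE (h1 _ fw). }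
have cM : #|M @: SX| = #|SX|.
{ apply: card_in_imset => a b; rewrite !inE => /eqP fa /eqP fb; exact: h2. }
have eXY : SY = SX.
{ apply/eqP; rewrite eqEcard sYX /= -cM; exact: subset_leq_card. }
apply: functional_extensionality => z.
have : (z \in SY) = (z \in SX) by rewrite eXY.
rewrite !inE. have := rf z; have := rft z.
case: (ft z =P 1); case: (f z =P 1) => a b r1 r2 //= _; lia.
Qed.

Lemma stepB (T : finType) (e : rel T) (ft : T -> nat) f M d v :
  token_placement 2 f -> perfect_matching f ft M ->
  (forall u, f u = 1 -> walk e u (M u) (d u)) -> ft v = 1 -> f v <> 1 ->
  exists f1 M1 d1, [/\ token_placement 2 f1, tp_adj e f f1, perfect_matching f1 ft M1,
     (forall u, f1 u = 1 -> walk e u (M1 u) (d1 u)) &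
     (\sum_(u | f1 u == 1) d1 u).+1 <= \sum_(u | f u == 1) d u].
Proof.
move=> [rf sf] [pm1 pm2 pm3] hw ftv fv.
have [u [fu Mu]] := pm3 v ftv.
have wlk := hw u fu. rewrite Mu in wlk.
have [x [y [i [j [wux exy wyv hij [fx fy]]]]]] := walk_split wlk fu fv.
pose f1 := fun z => if z == x then f y else if z == y then f x else f z.
pose g := fun z => if z == y then u else if z == u then x else z.
pose M1 := fun z => M (g z).
pose d1 := fun z => if z == y then j else if z == u then i + d x else d z.
have xy : x != y by apply/eqP => xy; apply: fy; rewrite -xy.
have uy : u != y by apply/eqP => uy; apply: fy; rewrite -uy.
have f1x : f1 x = f y by rewrite /f1 eqxx.
have f1y : f1 y = f x by rewrite /f1 eq_sym (negbTE xy) eqxx.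
have f1o : forall z, z != x -> z != y -> f1 z = f z.
{ by move=> z zx zy; rewrite /f1 (negbTE zx) (negbTE zy). }
have X1x : forall z, f1 z = 1 -> z != x.
{ move=> z fz; apply/eqP => zx; move: fz; rewrite zx f1x; exact: fy. }
have Xny : forall z, f z = 1 -> z != y.
{ move=> z fz; apply/eqP => zy; move: fz; rewrite zy; exact: fy. }
have X1o : forall z, f1 z = 1 -> z != y -> f z = 1.
{ move=> z fz zy; by rewrite -f1o // X1x. }
have gX : forall z, f1 z = 1 -> f (g z) = 1.
{ move=> z fz; rewrite /g; case: (eqVneq z y) => [_|zy] //.
  case: (eqVneq z u) => [_|zu] //. exact: X1o. }
have ginj : forall z z', f1 z = 1 -> f1 z' = 1 -> g z = g z' -> z = z'.
{ move=> z z' fz fz'; move/eqP: (X1x _ fz) => zx; move/eqP: (X1x _ fz') => z'x.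
  move/eqP: uy => uy'; rewrite /g.
  repeat (case: ifP => /eqP; move=> ?); move=> h; congruence. }
exists f1, M1, d1; split.
- split; first by move=> z; rewrite /f1; case: eqP => _; [|case: eqP => _]; exact: rf.
  move=> c hc; have [w fw] := sf c hc.
  case: (eqVneq w x) => [wx|wx]; first by exists y; rewrite f1y -wx.
  case: (eqVneq w y) => [wy|wy]; first by exists x; rewrite f1x -wy.
  by exists w; rewrite f1o.
- split; first by exists x; rewrite f1x fx => /esym.
  exists x, y; split => //; split => //; split => //.
  move=> w wx wy; apply: f1o; by apply/eqP.
- split.
  + move=> z fz; apply: pm1; exact: gX.
  + move=> z z' fz fz' h; apply: ginj => //; exact: pm2 (gX _ fz) (gX _ fz') h.
  + move=> v' hv'; have [w [fw Mw]] := pm3 v' hv'.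
    case: (eqVneq w u) => [wu|wu].
    * exists y; split; first by rewrite f1y.
      by rewrite /M1 /g eqxx -wu.
    * case: (eqVneq w x) => [wx|wx].
      -- exists u; split; first by rewrite f1o // eq_sym -wx.
         by rewrite /M1 /g (negbTE uy) eqxx -wx.
      -- exists w; split; first by rewrite f1o // Xny.
         by rewrite /M1 /g (negbTE (Xny _ fw)) (negbTE wu).
- move=> z fz; rewrite /M1 /d1 /g.
  case: (eqVneq z y) => [->|zy]; first by rewrite Mu.
  case: (eqVneq z u) => [->|zu]; first exact: walk_cat wux (hw x fx).
  exact: hw _ (X1o _ fz zy).
- rewrite (bigD1 y) /=; last by rewrite f1y fx.
  have h3 : forall w, w <> x -> w <> y -> f1 w = f w.
  { move=> w a b; apply: f1o; by apply/eqP. }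
  have E : \sum_(z | (f1 z == 1) && (z != y)) d1 z = \sum_(z | (f z == 1) && (z != x)) d1 z.
  { apply: eq_bigl => z; exact: swap_pred f1x f1y h3 fx fy z. }
  have d1y : d1 y = j by rewrite /d1 eqxx.
  rewrite E d1y (bigD1 x (P := fun z => f z == 1)) /=; last by apply/eqP.
  case: (eqVneq x u) => [xu|xu].
  + have E2 : \sum_(z | (f z == 1) && (z != x)) d1 z = \sum_(z | (f z == 1) && (z != x)) d z.
    { apply: eq_bigr => z /andP [fz zx].
      by rewrite /d1 (negbTE (Xny _ (eqP fz))) -xu (negbTE zx). }
    rewrite E2 -xu in hij *. lia.
  + have ux : u != x by rewrite eq_sym.
    rewrite (bigD1 u (P := fun z => (f z == 1) && (z != x))) /=; last by rewrite ux fu eqxx.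
    rewrite (bigD1 u (P := fun z => (f z == 1) && (z != x)) (F := d)) /=; last by rewrite ux fu eqxx.
    have E2 : \sum_(z | (f z == 1) && (z != x) && (z != u)) d1 z =
              \sum_(z | (f z == 1) && (z != x) && (z != u)) d z.
    { apply: eq_bigr => z /andP [/andP [fz zx] zu].
      by rewrite /d1 (negbTE (Xny _ (eqP fz))) (negbTE zu). }
    have d1u : d1 u = i + d x by rewrite /d1 (negbTE uy) eqxx.
    rewrite E2 d1u. lia.
Qed.

Lemma swap_seq0 (T : finType) (e : rel T) (f : T -> nat) :
  token_placement 2 f -> swap_seq 2 e f f 0.
Proof. move=> tp; exists [:: f]; split => //; by case. Qed.

Lemma swap_seq_cons (T : finType) (e : rel T) (f f1 ft : T -> nat) k :
  token_placement 2 f -> tp_adj e f f1 -> swap_seq 2 e f1 ft k -> swap_seq 2 e f ft k.+1.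
Proof.
move=> tp adj [s [ss s0 sk stp sadj]].
have D : forall i, i < k.+1 -> nth f s i = nth f1 s i.
{ move=> i hi; apply: set_nth_default; by rewrite ss. }
exists (f :: s); split => //=.
- by rewrite ss.
- by rewrite D.
- case => [|i] //= hi; rewrite D //; exact: stp.
- case => [|i] /= hi; first by rewrite D // s0.
  rewrite !D; try lia. exact: sadj.
Qed.

Lemma lemB (T : finType) (e : rel T) (ft : T -> nat) (rft : forall v, 1 <= ft v <= 2) :
  forall W f M d, token_placement 2 f -> perfect_matching f ft M ->
  (forall u, f u = 1 -> walk e u (M u) (d u)) -> \sum_(u | f u == 1) d u <= W ->
  exists2 k, k <= W & swap_seq 2 e f ft k.
Proof.
elim => [|W IH] f M d tpf pm hw hs.
all: case: (boolP [exists v, (ft v == 1) && (f v != 1)]).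
- move=> /existsP [v /andP [/eqP ftv /eqP fv]].
  have [f1 [M1 [d1 [_ _ _ _ hlt]]]] := stepB tpf pm hw ftv fv. lia.
- move=> /existsPn H. have eq : f = ft.
  { case: pm => pm1 pm2 pm3; apply: (noV (M := M)) => //; first by case: tpf.
    move=> v fv; have := H v; rewrite fv eqxx /=; by move/negPn/eqP. }
  subst ft; exists 0 => //; exact: swap_seq0.
- move=> /existsP [v /andP [/eqP ftv /eqP fv]].
  have [f1 [M1 [d1 [tp1 adj pm1 hw1 hlt]]]] := stepB tpf pm hw ftv fv.
  have [k hk sk] := IH f1 M1 d1 tp1 pm1 hw1 ltac:(lia).
  exists k.+1; first by []. exact: swap_seq_cons tpf adj sk.
- move=> /existsPn H. have eq : f = ft.
  { case: pm => pm1 pm2 pm3; apply: (noV (M := M)) => //; first by case: tpf.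
    move=> v fv; have := H v; rewrite fv eqxx /=; by move/negPn/eqP. }
  subst ft; exists 0 => //; exact: swap_seq0.
Qed.

Theorem mainTheorem6 (T : finType) (e : rel T)
  (e_sym : symmetric e) (e_irr : irreflexive e)
  (f0 ft : T -> nat)
  (h0 : token_placement 2 f0) (ht : token_placement 2 ft)
  (heq : tp_equiv e f0 ft) :
  forall o : option nat, OPT_is 2 e f0 ft o <-> min_matching_is e f0 ft o.
Proof.
have PQ : forall k, swap_seq 2 e f0 ft k -> exists2 k', k' <= k &
    exists M, perfect_matching f0 ft M /\ matching_weight_fin e f0 M k'.
{ move=> k sk. have [M [d [pm hw hs]]] := lemA e_sym sk.
  have [d' hd'] : exists d' : T -> nat, forall u,
      f0 u = 1 -> dist_is e u (M u) (Some (d' u)) /\ d' u <= d u.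
  { apply: (fchoice (R := fun u m => f0 u = 1 -> dist_is e u (M u) (Some m) /\ m <= d u)) => u. case: (eqVneq (f0 u) 1) => fu; last by exists 0 => h; rewrite h eqxx in fu.
    have [m [wm mmin]] := einf_exists (hw u fu).
    exists m => _; split; first by split.
    exact: mmin (hw u fu). }
  exists (\sum_(u | f0 u == 1) d' u).
  - apply: leq_trans hs; apply: leq_sum => u /eqP fu; exact: (hd' u fu).2.
  - exists M; split => //; exists d'; split => // u fu; exact: (hd' u fu).1. }
have QP : forall k, (exists M, perfect_matching f0 ft M /\ matching_weight_fin e f0 M k) ->
    exists2 k', k' <= k & swap_seq 2 e f0 ft k'.
{ move=> k [M [pm [d [hd hk]]]].
  have rft : forall v, 1 <= ft v <= 2 by case: ht.
  apply: (lemB rft h0 pm).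
  - move=> u fu; exact: (hd u fu).1.
  - by rewrite hk. }
move=> o; split; exact: einf_imp.
Qed.
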